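(* Let $\mathcal{S}\subseteq\mathcal{G}$, $t\in[T]$, $k\in[N]$. Let $\varepsilon\ge0$ and $D\ge1$ with $D\varepsilon\le1/6$. Suppose Assumption 1 holds and $\|A-\hat A\|\le\varepsilon$, $\|B_{\mathcal{S}}-\hat B_{\mathcal{S}}\|\le\varepsilon$, $\|P^{(t)}_{k,\mathcal{S}}-\hat P^{(t)}_{k,\mathcal{S}}\|\le D\varepsilon$. Then $$\|K^{(t)}_{k-1,\mathcal{S}}-\hat K^{(t)}_{k-1,\mathcal{S}}\|\le3\tilde\Gamma_{\mathcal{S}}^3D\varepsilon\quad\text{and}\quad\|P^{(t)}_{k-1,\mathcal{S}}-\hat P^{(t)}_{k-1,\mathcal{S}}\|\le20\tilde\Gamma_{\mathcal{S}}^9\sigma_RD\varepsilon.$$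
   Context: $A\in\mathbb{R}^{n\times n}$, $B=[B_1\ \cdots\ B_q]\in\mathbb{R}^{n\times m}$ with $B_i\in\mathbb{R}^{n\times m_i}$, actuator set $\mathcal{G}=\{1,\dots,q\}$; for $\mathcal{S}=\{i_1<\dots<i_H\}$, $B_{\mathcal{S}}=[B_{i_1}\ \cdots\ B_{i_H}]$. Horizon $N\ge1$, rounds $T\ge1$; for each $t\in[T]$: $Q^{(t)},Q_f^{(t)}\in\mathbb{S}^n_+$, $R^{(t)}\in\mathbb{S}^m_{++}$, $R^{(t)}_{\mathcal{S}}$ the principal submatrix for the input coordinates of actuators in $\mathcal{S}$. Riccati recursion: $P^{(t)}_{N,\mathcal{S}}=Q_f^{(t)}$, and for $k=N-1,\dots,0$: $K^{(t)}_{k,\mathcal{S}}=-(B_{\mathcal{S}}^\top P^{(t)}_{k+1,\mathcal{S}}B_{\mathcal{S}}+R^{(t)}_{\mathcal{S}})^{-1}B_{\mathcal{S}}^\top P^{(t)}_{k+1,\mathcal{S}}A$, $P^{(t)}_{k,\mathcal{S}}=Q^{(t)}+A^\top P^{(t)}_{k+1,\mathcal{S}}A-A^\top P^{(t)}_{k+1,\mathcal{S}}B_{\mathcal{S}}(B_{\mathcal{S}}^\top P^{(t)}_{k+1,\mathcal{S}}B_{\mathcal{S}}+R^{(t)}_{\mathcal{S}})^{-1}B_{\mathcal{S}}^\top P^{(t)}_{k+1,\mathcal{S}}A$. For estimates $\hat A,\hat B_{\mathcal{S}}$, $\hat P^{(t)}_{k,\mathcal{S}},\hat K^{(t)}_{k,\mathcal{S}}$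 are defined by the same recursion with $(A,B_{\mathcal{S}})$ replaced by $(\hat A,\hat B_{\mathcal{S}})$. $\Gamma^{(t)}_{k,\mathcal{S}}=\max\{\|A\|,\|B\|,\|P^{(t)}_{k,\mathcal{S}}\|,\|K^{(t)}_{k-1,\mathcal{S}}\|\}$ for $k\in[N]$, $\Gamma_{\mathcal{S}}=\max_{t\in[T],k\in[N]}\Gamma^{(t)}_{k,\mathcal{S}}$, $\tilde\Gamma_{\mathcal{S}}=1+\Gamma_{\mathcal{S}}$; $\sigma_R=\max_{t\in[T]}\sigma_1(R^{(t)})$; $\|\cdot\|$ spectral norm, singular values $\sigma_1\ge\sigma_2\ge\cdots$. Assumption 1: for all $t$, $Q_f^{(t)}\succ0$, $\sigma_n(Q^{(t)})\ge1$ and $\sigma_m(R^{(t)})\ge1$. *)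

(* Defs.v *)
From HB Require Import structures.
From mathcomp Require Import all_boot all_order all_algebra.
From mathcomp Require Import all_classical all_reals.
Set Implicit Arguments. Unset Strict Implicit. Unset Printing Implicit Defensive.
Import Order.TTheory GRing.Theory Num.Theory.
Local Open Scope classical_set_scope.
Local Open Scope ring_scope.

Section LQRDefs.
Variable R : realType.

Definition vnorm (n : nat) (x : 'cV[R]_n) : R :=
  Num.sqrt (\sum_(i < n) (x i 0) ^+ 2).

Definition specnorm (p n : nat) (M : 'M[R]_(p, n)) : R :=
  sup [set vnorm (M *m x) | x in [set x : 'cV[R]_n | vnorm x <= 1]].

Definition sigma_min (n : nat) (M : 'M[R]_n) : R :=
  inf [set vnorm (M *m x) | x in [set x : 'cV[R]_n | vnorm x = 1]].

Definition psd (n : nat) (M : 'M[R]_n) : Prop :=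
  M^T = M /\ forall x : 'cV[R]_n, 0 <= (x^T *m M *m x) 0 0.
Definition pd (n : nat) (M : 'M[R]_n) : Prop :=
  M^T = M /\ forall x : 'cV[R]_n, x != 0 -> 0 < (x^T *m M *m x) 0 0.

(* Actuator structure: input coordinate j of B belongs to actuator act j.
   S selects the input coordinates of the actuators in S. *)
Definition cols (m q : nat) (act : 'I_m -> 'I_q) (S : {set 'I_q}) : {set 'I_m} :=
  [set j : 'I_m | act j \in S].

(* B_S : the columns of B belonging to actuators in S, in increasing order *)
Definition Bsel (n m q : nat) (act : 'I_m -> 'I_q) (S : {set 'I_q})
  (B : 'M[R]_(n, m)) : 'M[R]_(n, #|cols act S|) :=
  \matrix_(i < n, j < #|cols act S|) B i (enum_val j).

Definition Rsel (m q : nat) (act : 'I_m -> 'I_q) (S : {set 'I_q})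
  (Rm : 'M[R]_m) : 'M[R]_(#|cols act S|) :=
  \matrix_(i < #|cols act S|, j < #|cols act S|) Rm (enum_val i) (enum_val j).

Definition rgain (n d : nat) (A : 'M[R]_n) (B : 'M[R]_(n, d)) (Rd : 'M[R]_d)
  (P : 'M[R]_n) : 'M[R]_(d, n) :=
  - (invmx (B^T *m P *m B + Rd) *m B^T *m P *m A).

Definition rstep (n d : nat) (A : 'M[R]_n) (B : 'M[R]_(n, d)) (Rd : 'M[R]_d)
  (Q : 'M[R]_n) (P : 'M[R]_n) : 'M[R]_n :=
  Q + A^T *m P *m A
    - A^T *m P *m B *m invmx (B^T *m P *m B + Rd) *m B^T *m P *m A.

(* P_k for horizon N: P_N = Qf, P_k = rstep P_{k+1}  (k <= N) *)
Fixpoint riter (n d : nat) (A : 'M[R]_n) (B : 'M[R]_(n, d)) (Rd : 'M[R]_d)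
  (Q Qf : 'M[R]_n) (j : nat) : 'M[R]_n :=
  match j with
  | 0 => Qf
  | j'.+1 => rstep A B Rd Q (riter A B Rd Q Qf j')
  end.

Definition Pric (n d : nat) (A : 'M[R]_n) (B : 'M[R]_(n, d)) (Rd : 'M[R]_d)
  (Q Qf : 'M[R]_n) (N k : nat) : 'M[R]_n :=
  riter A B Rd Q Qf (N - k).

Definition Kric (n d : nat) (A : 'M[R]_n) (B : 'M[R]_(n, d)) (Rd : 'M[R]_d)
  (Q Qf : 'M[R]_n) (N k : nat) : 'M[R]_(d, n) :=
  rgain A B Rd (Pric A B Rd Q Qf N k.+1).

Definition GammaS (n m q T N : nat) (act : 'I_m -> 'I_q) (S : {set 'I_q})
  (A : 'M[R]_n) (B : 'M[R]_(n, m)) (Q Qf : 'I_T -> 'M[R]_n)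
  (Rm : 'I_T -> 'M[R]_m) : R :=
  \big[Num.max/0]_(t < T) \big[Num.max/0]_(1 <= k < N.+1)
    Num.max (Num.max (specnorm A) (specnorm B))
      (Num.max (specnorm (Pric A (Bsel act S B) (Rsel act S (Rm t)) (Q t) (Qf t) N k))
               (specnorm (Kric A (Bsel act S B) (Rsel act S (Rm t)) (Q t) (Qf t) N k.-1))).

(* sigma_R = max_t sigma_1(R^t) = max_t ||R^t|| *)
Definition sigmaR (m T : nat) (Rm : 'I_T -> 'M[R]_m) : R :=
  \big[Num.max/0]_(t < T) specnorm (Rm t).

End LQRDefs.

(* Main.v *)
Require Import Defs.
From HB Require Import structures.
From mathcomp Require Import all_boot all_order all_algebra.
From mathcomp Require Import all_classical all_reals.
From mathcomp Require Import ring lra zify.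
Import Order.TTheory GRing.Theory Num.Theory.
Local Open Scope classical_set_scope.
Local Open Scope ring_scope.
Set Implicit Arguments. Unset Strict Implicit. Unset Printing Implicit Defensive.

Section VN.
Variable R : realType.
Implicit Types (a b c : R).

Definition dot n (x y : 'cV[R]_n) : R := \sum_(i < n) x i 0 * y i 0.

Lemma dotE n (x y : 'cV[R]_n) : (x^T *m y) 0 0 = dot x y.
Proof. by rewrite mxE; apply: eq_bigr => i _; rewrite mxE. Qed.

Lemma dotC n (x y : 'cV[R]_n) : dot x y = dot y x.
Proof. by apply: eq_bigr => i _; rewrite mulrC. Qed.

Lemma dotDl n (x y z : 'cV[R]_n) : dot (x + y) z = dot x z + dot y z.
Proof. by rewrite /dot -big_split; apply: eq_bigr => i _; rewrite mxE mulrDl. Qed.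

Lemma dotZl n a (x z : 'cV[R]_n) : dot (a *: x) z = a * dot x z.
Proof. by rewrite /dot mulr_sumr; apply: eq_bigr => i _; rewrite mxE mulrA. Qed.

Lemma dotNl n (x z : 'cV[R]_n) : dot (- x) z = - dot x z.
Proof. by rewrite -scaleN1r dotZl mulN1r. Qed.

Lemma dot_ge0 n (x : 'cV[R]_n) : 0 <= dot x x.
Proof. by apply: sumr_ge0 => i _; rewrite -expr2 sqr_ge0. Qed.

Lemma vnormE n (x : 'cV[R]_n) : vnorm x = Num.sqrt (dot x x).
Proof. by rewrite /vnorm /dot; congr Num.sqrt; apply: eq_bigr => i _; rewrite expr2. Qed.

Lemma vnorm_ge0 n (x : 'cV[R]_n) : 0 <= vnorm x.
Proof. by rewrite vnormE sqrtr_ge0. Qed.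

Lemma vnorm_sq n (x : 'cV[R]_n) : vnorm x ^+ 2 = dot x x.
Proof. by rewrite vnormE sqr_sqrtr // dot_ge0. Qed.

(* Lagrange identity based Cauchy-Schwarz *)
Lemma CS2 n (x y : 'cV[R]_n) : dot x y ^+ 2 <= dot x x * dot y y.
Proof.
have H : 0 <= \sum_(i < n) \sum_(j < n) (x i 0 * y j 0 - x j 0 * y i 0) ^+ 2.
  by apply: sumr_ge0 => i _; apply: sumr_ge0 => j _; rewrite sqr_ge0.
have E : \sum_(i < n) \sum_(j < n) (x i 0 * y j 0 - x j 0 * y i 0) ^+ 2
   = 2%:R * (dot x x * dot y y) - 2%:R * dot x y ^+ 2.
  have E1 : dot x x * dot y y = \sum_(i < n) \sum_(j < n) (x i 0 * x i 0 * (y j 0 * y j 0)).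
    by rewrite /dot mulr_suml; apply: eq_bigr => i _; rewrite mulr_sumr.
  have E2 : dot x x * dot y y = \sum_(i < n) \sum_(j < n) (x j 0 * x j 0 * (y i 0 * y i 0)).
    by rewrite E1 exchange_big.
  have E3 : dot x y ^+ 2 = \sum_(i < n) \sum_(j < n) (x i 0 * y i 0 * (x j 0 * y j 0)).
    by rewrite expr2 /dot mulr_suml; apply: eq_bigr => i _; rewrite mulr_sumr.
  have -> : 2%:R * (dot x x * dot y y) - 2%:R * dot x y ^+ 2
      = dot x x * dot y y + dot x x * dot y y - 2%:R * dot x y ^+ 2 by ring.
rewrite {1}E1 E2 E3 mulr_sumr -big_split -sumrN -big_split /=; apply: eq_bigr => i _.
  rewrite mulr_sumr -big_split -sumrN -big_split /=; apply: eq_bigr => j _.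
  by ring.
rewrite E subr_ge0 in H.
by rewrite -(@ler_pM2l _ 2%:R) // ltr0n.
Qed.

Lemma sq_le a b : 0 <= b -> a ^+ 2 <= b ^+ 2 -> a <= b.
Proof.
move=> hb h; case: (lerP a 0) => ha; first exact: le_trans ha hb.
by move: h; rewrite (@ler_pXn2r R 2%N isT a b) // nnegrE ltW.
Qed.

Lemma CS n (x y : 'cV[R]_n) : dot x y <= vnorm x * vnorm y.
Proof.
apply: sq_le; first by rewrite mulr_ge0 // vnorm_ge0.
by rewrite exprMn !vnorm_sq CS2.
Qed.

Lemma dotDr n (x y z : 'cV[R]_n) : dot z (x + y) = dot z x + dot z y.
Proof. by rewrite dotC dotDl !(dotC z). Qed.

Lemma vnormD n (x y : 'cV[R]_n) : vnorm (x + y) <= vnorm x + vnorm y.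
Proof.
apply: sq_le; first by rewrite addr_ge0 // vnorm_ge0.
rewrite vnorm_sq dotDl !dotDr sqrrD !vnorm_sq (dotC y x).
have := CS x y; lra.
Qed.

Lemma dotZr n a (x z : 'cV[R]_n) : dot z (a *: x) = a * dot z x.
Proof. by rewrite dotC dotZl dotC. Qed.

Lemma vnormZ n a (x : 'cV[R]_n) : vnorm (a *: x) = `|a| * vnorm x.
Proof.
rewrite !vnormE dotZl dotZr mulrA -expr2 sqrtrM ?sqr_ge0 //.
by rewrite sqrtr_sqr.
Qed.

Lemma vnormN n (x : 'cV[R]_n) : vnorm (- x) = vnorm x.
Proof. by rewrite -scaleN1r vnormZ normrN normr1 mul1r. Qed.

Lemma vnorm0 n : vnorm (0 : 'cV[R]_n) = 0.
Proof. by rewrite -(scale0r (0 : 'cV[R]_n)) vnormZ normr0 mul0r. Qed.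

Lemma vnorm_eq0 n (x : 'cV[R]_n) : vnorm x = 0 -> x = 0.
Proof.
move=> h; have : dot x x = 0 by rewrite -vnorm_sq h expr2 mulr0.
move/eqP; rewrite /dot psumr_eq0 => [|i _]; last by rewrite -expr2 sqr_ge0.
move/allP => H; apply/matrixP => i j; rewrite (ord1 j) mxE.
have := H i (mem_index_enum _); rewrite -expr2 sqrf_eq0 => /eqP ->.
by [].
Qed.

Definition frob p n (M : 'M[R]_(p, n)) : R :=
  Num.sqrt (\sum_(i < p) \sum_(j < n) M i j ^+ 2).

Lemma frob_ub p n (M : 'M[R]_(p, n)) x : vnorm (M *m x) <= frob M * vnorm x.
Proof.
apply: sq_le.
  by rewrite mulr_ge0 ?vnorm_ge0 ?sqrtr_ge0.
rewrite exprMn vnorm_sq /frob sqr_sqrtr; last first.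
  by apply: sumr_ge0 => i _; apply: sumr_ge0 => j _; rewrite sqr_ge0.
rewrite vnorm_sq mulr_suml /dot; apply: ler_sum => i _.
pose r : 'cV[R]_n := \col_j M i j.
have -> : (M *m x) i 0 * (M *m x) i 0 = dot r x ^+ 2.
  rewrite expr2 /dot mxE; congr (_ * _); apply: eq_bigr => j _; by rewrite mxE.
apply: (le_trans (CS2 r x)); rewrite /dot; apply: ler_pM => //.
- by apply: sumr_ge0 => j _; rewrite -expr2 sqr_ge0.
- by apply: sumr_ge0 => j _; rewrite -expr2 sqr_ge0.
- by apply: ler_sum => j _; rewrite mxE expr2.
Qed.

Definition SN p n (M : 'M[R]_(p, n)) :=
  [set vnorm (M *m x) | x in [set x : 'cV[R]_n | vnorm x <= 1]].

Lemma SN_ub p n (M : 'M[R]_(p, n)) : has_ubound (SN M).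
Proof.
exists (frob M) => y [x /= hx <-].
apply: (le_trans (frob_ub M x)).
by rewrite -{2}(mulr1 (frob M)) ler_wpM2l // sqrtr_ge0.
Qed.

Lemma SN_in p n (M : 'M[R]_(p, n)) x : vnorm x <= 1 -> vnorm (M *m x) <= specnorm M.
Proof. by move=> hx; apply: (ub_le_sup (SN_ub M)); exists x. Qed.

Lemma specnorm_ge0 p n (M : 'M[R]_(p, n)) : 0 <= specnorm M.
Proof.
have h := @SN_in p n M 0; rewrite mulmx0 !vnorm0 in h; exact: h ler01.
Qed.

Lemma specnorm_ub p n (M : 'M[R]_(p, n)) x : vnorm (M *m x) <= specnorm M * vnorm x.
Proof.
have [h0|hp] := eqVneq (vnorm x) 0.
  by rewrite h0 mulr0 (vnorm_eq0 h0) mulmx0 vnorm0.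
have cp : 0 < vnorm x by rewrite lt_def hp vnorm_ge0.
have := @SN_in p n M ((vnorm x)^-1 *: x).
rewrite vnormZ ger0_norm ?invr_ge0 ?vnorm_ge0 // mulVf // lexx => /(_ isT).
rewrite -scalemxAr vnormZ ger0_norm ?invr_ge0 ?vnorm_ge0 //.
by move=> h; rewrite -ler_pdivrMr // mulrC.
Qed.

Lemma specnorm_le p n (M : 'M[R]_(p, n)) c :
  0 <= c -> (forall x, vnorm (M *m x) <= c * vnorm x) -> specnorm M <= c.
Proof.
move=> c0 h; apply: ge_sup; first by exists (vnorm (M *m 0)); exists 0 => //=; rewrite vnorm0 ler01.
move=> y [x /= hx <-]; apply: (le_trans (h x)).
by rewrite -{2}(mulr1 c) ler_wpM2l.
Qed.

Lemma specnormD p n (M N : 'M[R]_(p, n)) : specnorm (M + N) <= specnorm M + specnorm N.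
Proof.
apply: specnorm_le; first by rewrite addr_ge0 ?specnorm_ge0.
move=> x; rewrite mulmxDl mulrDl; apply: (le_trans (vnormD _ _)).
by rewrite lerD ?specnorm_ub.
Qed.

Lemma specnormN p n (M : 'M[R]_(p, n)) : specnorm (- M) = specnorm M.
Proof.
apply/eqP; rewrite eq_le; apply/andP; split; apply: specnorm_le; rewrite ?specnorm_ge0 // => x.
  by rewrite mulNmx vnormN specnorm_ub.
by rewrite -vnormN -mulNmx specnorm_ub.
Qed.

Lemma specnormM p n r (M : 'M[R]_(p, n)) (N : 'M[R]_(n, r)) :
  specnorm (M *m N) <= specnorm M * specnorm N.
Proof.
apply: specnorm_le; first by rewrite mulr_ge0 ?specnorm_ge0.
move=> x; rewrite -mulmxA; apply: (le_trans (specnorm_ub _ _)).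
by rewrite -mulrA ler_wpM2l ?specnorm_ge0 ?specnorm_ub.
Qed.

Lemma specnorm_tr p n (M : 'M[R]_(p, n)) : specnorm M^T <= specnorm M.
Proof.
apply: specnorm_le; first exact: specnorm_ge0.
move=> y; set z := M^T *m y.
have h : vnorm z ^+ 2 <= vnorm y * (specnorm M * vnorm z).
  rewrite vnorm_sq -dotE /z trmx_mul trmxK -mulmxA dotE.
  apply: (le_trans (CS _ _)); rewrite ler_wpM2l ?vnorm_ge0 //.
  exact: specnorm_ub.
have [h0|hp] := eqVneq (vnorm z) 0.
  by rewrite h0 mulr_ge0 ?specnorm_ge0 ?vnorm_ge0.
have cp : 0 < vnorm z by rewrite lt_def hp vnorm_ge0.
rewrite expr2 mulrCA mulrC in h.
by rewrite -(ler_pM2r cp) -mulrA.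

Qed.

End VN.

Section V2.
Variable R : realType.

Lemma specnorm_sym p n (X Y : 'M[R]_(p, n)) : specnorm (X - Y) = specnorm (Y - X).
Proof. by rewrite -specnormN opprB. Qed.

Lemma specnorm_tri p n (X Y : 'M[R]_(p, n)) : specnorm Y <= specnorm X + specnorm (Y - X).
Proof. by rewrite -{1}(subrKC X Y) specnormD. Qed.

Lemma pert2 a b c (X X' : 'M[R]_(a, b)) (Y Y' : 'M[R]_(b, c)) :
  specnorm (X' *m Y' - X *m Y) <=
  specnorm (X' - X) * specnorm Y' + specnorm X * specnorm (Y' - Y).
Proof.
have -> : X' *m Y' - X *m Y = (X' - X) *m Y' + X *m (Y' - Y).
  by rewrite mulmxBl mulmxBr addrA subrK.
apply: (le_trans (specnormD _ _)); apply: lerD; exact: specnormM.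
Qed.

Lemma pert3 a b c d (X X' : 'M[R]_(a, b)) (Y Y' : 'M[R]_(b, c)) (Z Z' : 'M[R]_(c, d)) :
  specnorm (X' *m Y' *m Z' - X *m Y *m Z) <=
  specnorm (X' - X) * specnorm Y' * specnorm Z'
  + specnorm X * specnorm (Y' - Y) * specnorm Z'
  + specnorm X * specnorm Y * specnorm (Z' - Z).
Proof.
have -> : X' *m Y' *m Z' - X *m Y *m Z
   = (X' - X) *m Y' *m Z' + X *m (Y' - Y) *m Z' + X *m Y *m (Z' - Z).
  by rewrite !mulmxBl mulmxBr mulmxBl mulmxBr !addrA subrK subrK.
apply: (le_trans (specnormD _ _)); apply: lerD; last first.
  apply: (le_trans (specnormM _ _)); apply: ler_wpM2r; first exact: specnorm_ge0.
  exact: specnormM.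
apply: (le_trans (specnormD _ _)); apply: lerD.
  apply: (le_trans (specnormM _ _)); apply: ler_wpM2r; first exact: specnorm_ge0.
  exact: specnormM.
apply: (le_trans (specnormM _ _)); apply: ler_wpM2r; first exact: specnorm_ge0.
exact: specnormM.
Qed.

Definition qf n (M : 'M[R]_n) (x : 'cV[R]_n) := dot x (M *m x).
Definition posf n (M : 'M[R]_n) := forall x, 0 <= qf M x.

Lemma qfE n (M : 'M[R]_n) x : (x^T *m M *m x) 0 0 = qf M x.
Proof. by rewrite -mulmxA dotE. Qed.

Lemma psd_posf n (M : 'M[R]_n) : psd M -> posf M.
Proof. by move=> [_ h] x; rewrite -qfE. Qed.

Lemma dot_tr p n (M : 'M[R]_(p, n)) w x : dot w (M *m x) = dot (M^T *m w) x.
Proof. by rewrite -!dotE trmx_mul trmxK mulmxA. Qed.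

Lemma dotNr n (x z : 'cV[R]_n) : dot z (- x) = - dot z x.
Proof. by rewrite dotC dotNl dotC. Qed.

Lemma dotBr n (x y z : 'cV[R]_n) : dot z (x - y) = dot z x - dot z y.
Proof. by rewrite dotDr dotNr. Qed.

Lemma unit_of_inj n (M : 'M[R]_n) : (forall x : 'cV[R]_n, M *m x = 0 -> x = 0) -> M \in unitmx.
Proof.
move=> h; rewrite -unitmx_tr -row_free_unit -kermx_eq0; apply/eqP.
set K := kermx M^T; apply/matrixP => i j.
have hr : row i K *m M^T = 0 by rewrite -row_mul mulmx_ker; apply/rowP => k; rewrite !mxE.
have : M *m (row i K)^T = 0.
  by rewrite -{1}(trmxK M) -trmx_mul hr; apply/matrixP => a b; rewrite !mxE.
move/h/matrixP => /(_ j 0); rewrite !mxE => ->; by [].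
Qed.

Lemma lower_inj n (M : 'M[R]_n) : (forall x, vnorm x ^+ 2 <= qf M x) ->
  forall x, vnorm x <= vnorm (M *m x).
Proof.
move=> h x; have h1 := h x; have h2 := CS x (M *m x).
have [h0|hp] := eqVneq (vnorm x) 0; first by rewrite h0 vnorm_ge0.
have cp : 0 < vnorm x by rewrite lt_def hp vnorm_ge0.
rewrite /qf in h1; rewrite -(ler_pM2l cp) -expr2; exact: le_trans h1 h2.
Qed.

Lemma lower_unit n (M : 'M[R]_n) : (forall x, vnorm x ^+ 2 <= qf M x) -> M \in unitmx.
Proof.
move=> h; apply: unit_of_inj => x hx; apply: vnorm_eq0.
apply/eqP; rewrite eq_le vnorm_ge0 andbT.
by have := lower_inj h x; rewrite hx vnorm0.
Qed.

Lemma qfD n (M N : 'M[R]_n) x : qf (M + N) x = qf M x + qf N x.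
Proof. by rewrite /qf mulmxDl dotDr. Qed.

Lemma qf_BPB n d (B : 'M[R]_(n, d)) P x : qf (B^T *m P *m B) x = qf P (B *m x).
Proof. by rewrite /qf -!mulmxA dot_tr trmxK. Qed.

Lemma M_lower n d (B : 'M[R]_(n, d)) P Rd : posf P -> (forall x, vnorm x ^+ 2 <= qf Rd x) ->
  forall x, vnorm x ^+ 2 <= qf (B^T *m P *m B + Rd) x.
Proof.
move=> hP hR x; rewrite qfD qf_BPB; have := hP (B *m x); have := hR x; lra.
Qed.

End V2.

Section V3.
Variable R : realType.

Lemma sum_delta (T : finType) (a : T) (F : T -> R) :
  \sum_(j : T) (a == j)%:R * F j = F a.
Proof.
rewrite (bigD1 a) //= eqxx mul1r big1 ?addr0 // => j /negbTE.
by rewrite eq_sym => ->; rewrite mul0r.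
Qed.

Definition Emx (m q : nat) (act : 'I_m -> 'I_q) (S : {set 'I_q}) : 'M[R]_(m, #|cols act S|) :=
  \matrix_(j < m, i < #|cols act S|) (enum_val i == j)%:R.

Lemma Bsel_E n m q (act : 'I_m -> 'I_q) S (B : 'M[R]_(n, m)) : Bsel act S B = B *m Emx act S.
Proof.
apply/matrixP => r i; rewrite !mxE.
under eq_bigr do rewrite mxE mulrC.
by rewrite sum_delta.
Qed.

Lemma Rsel_E m q (act : 'I_m -> 'I_q) S (Rm : 'M[R]_m) :
  Rsel act S Rm = (Emx act S)^T *m Rm *m Emx act S.
Proof.
rewrite -mulmxA -Bsel_E; apply/matrixP => r i; rewrite !mxE.
under eq_bigr do rewrite !mxE.
by rewrite sum_delta.
Qed.

Lemma EtE m q (act : 'I_m -> 'I_q) S : (Emx act S)^T *m Emx act S = 1%:M.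
Proof.
apply/matrixP => i i'; rewrite !mxE.
under eq_bigr do rewrite !mxE.
rewrite sum_delta (inj_eq enum_val_inj) eq_sym.
by [].
Qed.

Lemma vnormE_ m q (act : 'I_m -> 'I_q) S x : vnorm (Emx act S *m x) = vnorm x.
Proof. by rewrite !vnormE dot_tr mulmxA EtE mul1mx. Qed.

Lemma specnorm_E m q (act : 'I_m -> 'I_q) S : specnorm (Emx act S) <= 1.
Proof. by apply: specnorm_le => // x; rewrite vnormE_ mul1r. Qed.

Lemma specnorm_Bsel n m q (act : 'I_m -> 'I_q) S (B : 'M[R]_(n, m)) :
  specnorm (Bsel act S B) <= specnorm B.
Proof.
rewrite Bsel_E; apply: (le_trans (specnormM _ _)).
rewrite -{2}(mulr1 (specnorm B)) ler_wpM2l ?specnorm_ge0 //; exact: specnorm_E.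
Qed.

Lemma qf_Rsel m q (act : 'I_m -> 'I_q) S (Rm : 'M[R]_m) x :
  qf (Rsel act S Rm) x = qf Rm (Emx act S *m x).
Proof. by rewrite Rsel_E qf_BPB. Qed.

Lemma pd_posf n (M : 'M[R]_n) : pd M -> posf M.
Proof.
move=> [_ h] x; have [->|xn0] := eqVneq x 0.
  by rewrite /qf /dot big1 // => i _; rewrite mxE mul0r.
by rewrite -qfE ltW // h.
Qed.

Lemma sigma_inj m (Rm : 'M[R]_m) : 1 <= sigma_min Rm -> forall y, vnorm y <= vnorm (Rm *m y).
Proof.
move=> hs y.
have [h0|hp] := eqVneq (vnorm y) 0; first by rewrite h0 vnorm_ge0.
have cp : 0 < vnorm y by rewrite lt_def hp vnorm_ge0.
set u := (vnorm y)^-1 *: y.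
have hu : vnorm u = 1 by rewrite /u vnormZ ger0_norm ?invr_ge0 ?vnorm_ge0 // mulVf.
have hlb : has_lbound [set vnorm (Rm *m x) | x in [set x : 'cV[R]_m | vnorm x = 1]].
  by exists 0 => z [x _ <-]; exact: vnorm_ge0.
have := ge_inf hlb; move=> /(_ (vnorm (Rm *m u))) h.
have h' : sigma_min Rm <= vnorm (Rm *m u) by apply: h; exists u.
have h1 := le_trans hs h'.
move: h1; rewrite /u -scalemxAr vnormZ ger0_norm ?invr_ge0 ?vnorm_ge0 //.
by rewrite mulrC ler_pdivlMr // mul1r.
Qed.

Lemma RgeI m (Rm : 'M[R]_m) : pd Rm -> 1 <= sigma_min Rm -> forall x, vnorm x ^+ 2 <= qf Rm x.
Proof.
move=> [hsym hpd] hs x.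
have hinj := sigma_inj hs.
have hu : Rm \in unitmx.
  apply: unit_of_inj => y hy; apply: vnorm_eq0; apply/eqP; rewrite eq_le vnorm_ge0 andbT.
  by have := hinj y; rewrite hy vnorm0.
have [->|xn0] := eqVneq x 0; first by rewrite vnorm0 expr2 mulr0 pd_posf.
set w := invmx Rm *m x.
have hw : Rm *m w = x by rewrite /w mulKVmx.
have wn0 : w != 0 by apply: contraNneq xn0 => e; rewrite -hw e mulmx0.
have ha : 0 < qf Rm x by rewrite -qfE; exact: hpd.
have hc : 0 < qf Rm w by rewrite -qfE; exact: hpd.
have hcx : qf Rm w = dot w x by rewrite /qf hw.
have hb : dot x (Rm *m w) = vnorm x ^+ 2 by rewrite hw vnorm_sq.
have hsy : dot w (Rm *m x) = dot x (Rm *m w) by rewrite dot_tr hsym dotC.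
have hwx : vnorm w <= vnorm x by have := hinj w; rewrite hw.
have hcle : qf Rm w <= vnorm x ^+ 2.
  rewrite hcx; apply: (le_trans (CS _ _)); rewrite expr2 ler_wpM2r ?vnorm_ge0 //.
set X := vnorm x ^+ 2; set A := qf Rm x; set C := qf Rm w.
have hX : 0 < X by rewrite /X exprn_gt0 // lt_def vnorm_ge0 andbT; apply: contra xn0 => /eqP/vnorm_eq0 ->.
have hv := pd_posf (conj hsym hpd) (C *: x + (- X) *: w).
move: hv; rewrite /qf mulmxDr -!scalemxAr dotDl !dotDr !dotZl !dotZr.
rewrite -/(qf Rm x) -/(qf Rm w) -/A -/C hsy hb -/X => hv.
have h1 : 0 <= C * (C * A - X * X) by move: hv; rewrite mulrBr; lra.
have h2 : X * X <= C * A by move: h1; rewrite pmulr_rge0 // subr_ge0.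
have h3 : X * X <= X * A by apply: (le_trans h2); rewrite ler_wpM2r // ltW.
by move: h3; rewrite ler_pM2l.
Qed.

End V3.

Section N.
Variable R : realType.

Lemma trip (a b c A B C : R) : 0 <= a -> a <= A -> 0 <= b -> b <= B -> 0 <= c -> c <= C ->
  a * b * c <= A * B * C.
Proof.
move=> a0 aA b0 bB c0 cC; apply: ler_pM; rewrite ?mulr_ge0 //.
exact: ler_pM.
Qed.

Lemma fin1 (g d mk kk w : R) : 0 <= g -> 0 <= d -> 0 <= mk -> mk <= 3 * d * (g + 1) ^+ 2 ->
  0 <= kk -> kk <= g -> 0 <= w -> w <= 3 * d * (g + 1) ^+ 2 ->
  mk * kk + w <= 3 * (1 + g) ^+ 3 * d.
Proof.
move=> g0 d0 mk0 hmk kk0 hkk w0 hw.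
have h1 : mk * kk <= 3 * d * (g + 1) ^+ 2 * g by apply: ler_pM.
have -> : 3 * (1 + g) ^+ 3 * d = 3 * d * (g + 1) ^+ 2 * g + 3 * d * (g + 1) ^+ 2 by ring.
exact: lerD.
Qed.

Lemma fin2 (g d s e1 e2 kh y dk : R) : 0 <= g -> 0 <= d -> d <= 1/6 -> 1 <= s ->
  0 <= e1 -> e1 <= 3 * d * (g + 1) ^+ 2 ->
  0 <= e2 -> e2 <= 3 * d * (g + 1) ^+ 2 ->
  0 <= kh -> kh <= g + 3 * (1 + g) ^+ 3 * d ->
  0 <= y -> y <= g * g * g ->
  0 <= dk -> dk <= 3 * (1 + g) ^+ 3 * d ->
  e1 + (e2 * kh + y * dk) <= 20 * (1 + g) ^+ 9 * s * d.
Proof.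
move=> g0 d0 d6 s1 e10 he1 e20 he2 kh0 hkh y0 hy dk0 hdk.
rewrite (addrC g 1) in he1 he2.
set G := 1 + g in he1 he2 hkh hdk *.
have G1 : 1 <= G by rewrite /G; lra.
have gG : g <= G by rewrite /G; lra.
have G0 : 0 <= G by lra.
have pw : forall i j, (i <= j)%N -> G ^+ i <= G ^+ j by move=> i j; apply: ler_weXn2l.
have hG3 : G <= G ^+ 3 by have := pw 1%N 3%N isT; rewrite expr1.
have hkh' : kh <= 2 * G ^+ 3.
  apply: (le_trans hkh). have : 0 <= G ^+ 3 * d by rewrite mulr_ge0 // exprn_ge0.
  have : G ^+ 3 * d <= G ^+ 3 * (1/6) by rewrite ler_wpM2l // exprn_ge0.
  lra.
set H := G ^+ 9.
have H0 : 0 <= H by rewrite exprn_ge0.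
have b1 : e1 <= 3 * d * H.
  by apply: (le_trans he1); rewrite ler_wpM2l ?mulr_ge0 ?pw.
have b2 : e2 * kh <= 6 * d * H.
  apply: (le_trans (ler_pM e20 kh0 he2 hkh')).
  have -> : 3 * d * G ^+ 2 * (2 * G ^+ 3) = 6 * d * (G ^+ 2 * G ^+ 3) by ring.
  by rewrite -exprD ler_wpM2l ?mulr_ge0 ?pw.
have b3 : y * dk <= 3 * d * H.
  have hy' : y <= G ^+ 3.
    apply: (le_trans hy); rewrite exprS expr2 mulrA; exact: trip.
  apply: (le_trans (ler_pM y0 dk0 hy' hdk)).
  have -> : G ^+ 3 * (3 * G ^+ 3 * d) = 3 * d * (G ^+ 3 * G ^+ 3) by ring.
  by rewrite -exprD ler_wpM2l ?mulr_ge0 ?pw.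
have hx : 0 <= (d * H) * (s - 1) by rewrite mulr_ge0 ?mulr_ge0 // subr_ge0.
have -> : 20 * H * s * d = 20 * (d * H) * s by ring.
nra.
Qed.

End N.

Section V4.
Variable R : realType.

Lemma MK_eq n d (A : 'M[R]_n) (B : 'M[R]_(n, d)) Rd P :
  (B^T *m P *m B + Rd) \in unitmx ->
  (B^T *m P *m B + Rd) *m rgain A B Rd P = - (B^T *m P *m A).
Proof.
move=> hu; rewrite /rgain mulmxN !mulmxA mulmxV // mul1mx.
by [].
Qed.

Lemma rstep_posf n d (A : 'M[R]_n) (B : 'M[R]_(n, d)) Rd Q P :
  posf Q -> posf P -> (forall x, vnorm x ^+ 2 <= qf Rd x) ->
  posf (rstep A B Rd Q P).
Proof.
move=> hQ hP hR x.
set M := B^T *m P *m B + Rd.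
have hu : M \in unitmx by apply: lower_unit; apply: M_lower.
set K := rgain A B Rd P.
have hMK := MK_eq A hu.
set a := A *m x; set v := K *m x.
have E1 : qf (rstep A B Rd Q P) x = qf Q x + dot a (P *m a) + dot a (P *m (B *m v)).
  rewrite /qf /rstep mulmxDl mulNmx mulmxDl !dotDr dotNr.
  rewrite /v /K /rgain mulNmx -!mulmxA !mulmxN dotNr.
  by rewrite !(dot_tr A^T) trmxK.
have E2 : dot v (M *m v) = - dot (B *m v) (P *m a).
  have Mv : M *m v = - (B^T *m (P *m a)) by rewrite /v /a mulmxA hMK mulNmx -!mulmxA.
  by rewrite Mv dotNr dot_tr trmxK.
have E3 : dot v (M *m v) = dot (B *m v) (P *m (B *m v)) + dot v (Rd *m v).
  by rewrite /M mulmxDl dotDr -!mulmxA dot_tr trmxK.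
have E4 : qf P (a + B *m v) = dot a (P *m a) + dot a (P *m (B *m v))
     + dot (B *m v) (P *m a) + dot (B *m v) (P *m (B *m v)).
  by rewrite /qf mulmxDr !dotDl !dotDr !addrA.
rewrite E1; have := hP (a + B *m v); have := hR v; have := hQ x.
have := sqr_ge0 (vnorm v).
rewrite E4 /qf; move: E2 E3; rewrite /qf; lra.
Qed.

Lemma riter_posf n d (A : 'M[R]_n) (B : 'M[R]_(n, d)) Rd Q Qf :
  posf Q -> posf Qf -> (forall x, vnorm x ^+ 2 <= qf Rd x) ->
  forall j, posf (riter A B Rd Q Qf j).
Proof.
move=> hQ hQf hR; elim=> [|j IH] //=; exact: rstep_posf.
Qed.

Lemma bigmax_ub (I : eqType) (s : seq I) (F : I -> R) i :
  i \in s -> F i <= \big[Num.max/0]_(j <- s) F j.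
Proof.
elim: s => [//|y s IH]; rewrite in_cons big_cons => /orP [/eqP ->|hi].
  by rewrite le_max lexx.
by rewrite le_max IH ?orbT.
Qed.

End V4.

Section V5.
Variable R : realType.

Lemma tri_bound a b c e (X X' : 'M[R]_(a, b)) (Y Y' : 'M[R]_(b, c)) (Z Z' : 'M[R]_(c, e)) (g d : R) :
  0 <= g -> 0 <= d -> d <= 1 ->
  specnorm X <= g -> specnorm Y <= g -> specnorm Z <= g ->
  specnorm (X' - X) <= d -> specnorm (Y' - Y) <= d -> specnorm (Z' - Z) <= d ->
  specnorm (X' *m Y' *m Z' - X *m Y *m Z) <= 3 * d * (g + 1) ^+ 2.
Proof.
move=> g0 d0 d1 hX hY hZ dX dY dZ.
apply: (le_trans (pert3 _ _ _ _ _ _)).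
have hY' : specnorm Y' <= g + 1.
  apply: (le_trans (specnorm_tri Y Y')); lra.
have hZ' : specnorm Z' <= g + 1.
  apply: (le_trans (specnorm_tri Z Z')); lra.
have t1 := trip (specnorm_ge0 (X' - X)) dX (specnorm_ge0 Y') hY' (specnorm_ge0 Z') hZ'.
have t2 := trip (specnorm_ge0 X) hX (specnorm_ge0 (Y' - Y)) dY (specnorm_ge0 Z') hZ'.
have t3 := trip (specnorm_ge0 X) hX (specnorm_ge0 Y) hY (specnorm_ge0 (Z' - Z)) dZ.
have e1 : g * d * (g + 1) <= d * (g + 1) * (g + 1).
  have := mulr_ge0 d0 (addr_ge0 g0 ler01); nra.
have e2 : g * g * d <= d * (g + 1) * (g + 1).
  have := mulr_ge0 d0 g0; have := mulr_ge0 d0 (mulr_ge0 g0 g0); nra.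
rewrite expr2 mulrA; lra.
Qed.

Lemma spec_ge1 m (Rm : 'M[R]_m) : 1 <= sigma_min Rm -> 1 <= specnorm Rm.
Proof.
move=> hs; case: (pselect (exists y : 'cV[R]_m, vnorm y = 1)) => [[y hy]|hn].
  by have := le_trans (sigma_inj hs y) (specnorm_ub Rm y); rewrite hy mulr1.
exfalso; move: hs; rewrite /sigma_min.
have -> : [set vnorm (Rm *m x) | x in [set x : 'cV[R]_m | vnorm x = 1]] = set0.
  by apply/seteqP; split => z //= [y hy _]; apply: hn; exists y.
by rewrite inf0 ler10.
Qed.

Lemma rstep_alt n d (A : 'M[R]_n) (B : 'M[R]_(n, d)) Rd Q P :
  rstep A B Rd Q P = Q + A^T *m P *m A + (A^T *m P *m B) *m rgain A B Rd P.
Proof. by rewrite /rstep /rgain mulmxN !mulmxA. Qed.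

Lemma zid3 p n (q a1 a2 b1 b2 : 'M[R]_(p, n)) : (q + a2 + b2) - (q + a1 + b1) = (a2 - a1) + (b2 - b1).
Proof. by rewrite opprD opprD addrACA (addrACA q a2) subrr add0r. Qed.

Lemma zidW p n (u v w : 'M[R]_(p, n)) : u - - v = u - - w + (v - w).
Proof. by rewrite !opprK -addrA [w + _]addrC subrK. Qed.

End V5.

Local Close Scope classical_set_scope.
Unset Implicit Arguments.

Theorem lemma1 (R : realType) (n m q T N : nat) (act : 'I_m -> 'I_q)
  (Hact : forall j1 j2 : 'I_m, (j1 <= j2)%N -> (act j1 <= act j2)%N)
  (A : 'M[R]_n) (B : 'M[R]_(n, m))
  (Q Qf : 'I_T -> 'M[R]_n) (Rm : 'I_T -> 'M[R]_m)
  (HQ : forall t, psd (Q t)) (HQf : forall t, psd (Qf t)) (HR : forall t, pd (Rm t))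
  (HQfpd : forall t, pd (Qf t))
  (HQsig : forall t, 1 <= sigma_min (Q t))
  (HRsig : forall t, 1 <= sigma_min (Rm t))
  (S : {set 'I_q}) (t : 'I_T) (k : nat) (Hk : (1 <= k <= N)%N)
  (eps D : R) (Heps : 0 <= eps) (HD : 1 <= D) (HDe : D * eps <= 1 / 6)
  (Ahat : 'M[R]_n) (BShat : 'M[R]_(n, #|cols act S|))
  (HA : specnorm (A - Ahat) <= eps)
  (HB : specnorm (Bsel act S B - BShat) <= eps)
  (HP : specnorm (Pric A (Bsel act S B) (Rsel act S (Rm t)) (Q t) (Qf t) N k
                  - Pric Ahat BShat (Rsel act S (Rm t)) (Q t) (Qf t) N k) <= D * eps) :
  let Gt := 1 + @GammaS R n m q T N act S A B Q Qf Rm in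
  specnorm (Kric A (Bsel act S B) (Rsel act S (Rm t)) (Q t) (Qf t) N k.-1
            - Kric Ahat BShat (Rsel act S (Rm t)) (Q t) (Qf t) N k.-1)
    <= 3 * Gt ^+ 3 * D * eps /\
  specnorm (Pric A (Bsel act S B) (Rsel act S (Rm t)) (Q t) (Qf t) N k.-1
            - Pric Ahat BShat (Rsel act S (Rm t)) (Q t) (Qf t) N k.-1)
    <= 20 * Gt ^+ 9 * sigmaR Rm * D * eps.
Proof.
move=> Gt.
set BS := Bsel act S B; set RS := Rsel act S (Rm t).
set g := GammaS N act S A B Q Qf Rm.
have hG : Num.max (Num.max (specnorm A) (specnorm B))
   (Num.max (specnorm (Pric A BS RS (Q t) (Qf t) N k))
            (specnorm (Kric A BS RS (Q t) (Qf t) N k.-1))) <= g.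
  rewrite /g /GammaS.
  apply: (le_trans _ (bigmax_ub _ (mem_index_enum t))).
  apply: (le_trans _ (bigmax_ub _ _)); first exact: lexx.
  by rewrite mem_index_iota.
move: hG; rewrite !ge_max => /andP [/andP [hA0 hB0] /andP [hP0 hK0]].
have hs : 1 <= sigmaR Rm.
  apply: (le_trans (spec_ge1 (HRsig t))).
  exact: (bigmax_ub _ (mem_index_enum t)).
set d := D * eps in HDe HP *.
have d0 : 0 <= d by rewrite /d mulr_ge0 //; lra.
have ed : eps <= d by rewrite /d -{1}(mul1r eps) ler_wpM2r.
have d1 : d <= 1 by lra.
have g0 : 0 <= g by apply: le_trans hA0; exact: specnorm_ge0.
have hRS : forall x, vnorm x ^+ 2 <= qf RS x.
  by move=> x; rewrite /RS qf_Rsel -(vnormE_ (act:=act) (S:=S) x); apply: RgeI.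
have hQp := psd_posf (HQ t); have hQfp := psd_posf (HQf t).
have hPp := riter_posf A BS hQp hQfp hRS (N - k).
have hPhp := riter_posf Ahat BShat hQp hQfp hRS (N - k).
have ek : k.-1.+1 = k by clear - Hk; lia.
have eN : (N - k.-1 = (N - k).+1)%N by clear - Hk; lia.
have eK : Kric A BS RS (Q t) (Qf t) N k.-1 = rgain A BS RS (Pric A BS RS (Q t) (Qf t) N k)
  by rewrite /Kric ek.
have eKh : Kric Ahat BShat RS (Q t) (Qf t) N k.-1
   = rgain Ahat BShat RS (Pric Ahat BShat RS (Q t) (Qf t) N k)
  by rewrite /Kric ek.
have eP : Pric A BS RS (Q t) (Qf t) N k.-1 = rstep A BS RS (Q t) (Pric A BS RS (Q t) (Qf t) N k)
  by rewrite /Pric eN.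
have ePh : Pric Ahat BShat RS (Q t) (Qf t) N k.-1
   = rstep Ahat BShat RS (Q t) (Pric Ahat BShat RS (Q t) (Qf t) N k)
  by rewrite /Pric eN.
rewrite eK eKh eP ePh; rewrite eK in hK0.
set P := Pric A BS RS (Q t) (Qf t) N k in hPp hP0 HP *.
set Ph := Pric Ahat BShat RS (Q t) (Qf t) N k in hPhp HP *.
set M := BS^T *m P *m BS + RS.
set Mh := BShat^T *m Ph *m BShat + RS.
have hML : forall x, vnorm x ^+ 2 <= qf M x by apply: M_lower.
have hMhL : forall x, vnorm x ^+ 2 <= qf Mh x by apply: M_lower.
have hMu := lower_unit hML; have hMhu := lower_unit hMhL.
set K := rgain A BS RS P in hK0 *.
set Kh := rgain Ahat BShat RS Ph.
have hMK : M *m K = - (BS^T *m P *m A) by exact: MK_eq.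
have hMKh : Mh *m Kh = - (BShat^T *m Ph *m Ahat) by exact: MK_eq.
have hW : Mh *m (K - Kh) = (Mh - M) *m K + (BShat^T *m Ph *m Ahat - BS^T *m P *m A).
  rewrite mulmxBr mulmxBl hMK hMKh; exact: zidW.
have hMdiff : Mh - M = BShat^T *m Ph *m BShat - BS^T *m P *m BS.
  by rewrite /Mh /M opprD addrACA subrr addr0.
have hdK : specnorm (K - Kh) <= specnorm (Mh - M) * specnorm K
     + specnorm (BShat^T *m Ph *m Ahat - BS^T *m P *m A).
  have hle : specnorm (K - Kh) <= specnorm (Mh *m (K - Kh)).
    apply: specnorm_le; first exact: specnorm_ge0.
    move=> x; apply: (le_trans (lower_inj hMhL ((K - Kh) *m x))).
    by rewrite mulmxA specnorm_ub.
  apply: (le_trans hle); rewrite hW; apply: (le_trans (specnormD _ _)).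
  by rewrite lerD2r specnormM.
have nBS : specnorm BS <= g by apply: le_trans hB0; exact: specnorm_Bsel.
have nBSt : specnorm BS^T <= g by apply: le_trans nBS; exact: specnorm_tr.
have nAt : specnorm A^T <= g by apply: le_trans hA0; exact: specnorm_tr.
have dB : specnorm (BShat - BS) <= d by rewrite specnorm_sym; lra.
have dA : specnorm (Ahat - A) <= d by rewrite specnorm_sym; lra.
have dP : specnorm (Ph - P) <= d by rewrite specnorm_sym.
have dBt : specnorm (BShat^T - BS^T) <= d.
  by rewrite -linearB /=; apply: le_trans dB; exact: specnorm_tr.
have dAt : specnorm (Ahat^T - A^T) <= d.
  by rewrite -linearB /=; apply: le_trans dA; exact: specnorm_tr.
have t1 := tri_bound g0 d0 d1 nBSt hP0 nBS dBt dP dB.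
have t2 := tri_bound g0 d0 d1 nBSt hP0 hA0 dBt dP dA.
have t3 := tri_bound g0 d0 d1 nAt hP0 hA0 dAt dP dA.
have t4 := tri_bound g0 d0 d1 nAt hP0 nBS dAt dP dB.
have part1 : specnorm (K - Kh) <= 3 * (1 + g) ^+ 3 * d.
  apply: (le_trans hdK); rewrite hMdiff; apply: fin1 => //; exact: specnorm_ge0.
split; first by rewrite /Gt -mulrA.
rewrite !rstep_alt specnorm_sym zid3.
apply: (le_trans (specnormD _ _)).
have hY : specnorm (A^T *m P *m BS) <= g * g * g.
  apply: (le_trans (specnormM _ _)).
  apply: (le_trans _ (trip (specnorm_ge0 A^T) nAt (specnorm_ge0 P) hP0 (specnorm_ge0 BS) nBS)).
  apply: ler_wpM2r; [exact: specnorm_ge0 | exact: specnormM].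
have hdk : specnorm (Kh - K) <= 3 * (1 + g) ^+ 3 * d by rewrite specnorm_sym.
have hKh : specnorm Kh <= g + 3 * (1 + g) ^+ 3 * d.
  by apply: (le_trans (specnorm_tri K Kh)); apply: lerD.
apply: (le_trans (lerD (lexx _) (pert2 _ _ _ _))).
rewrite /Gt -mulrA -/d.
apply: fin2 => //; exact: specnorm_ge0.
Qed.
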